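(* Every shift space $X\subseteq\mathscr{A}^\infty$ with the $\bar d$-shadowing property is $\bar d$-approachable.
   Context: $\mathscr{A}$ finite; shift spaces are nonempty closed shift-invariant subsets of $\mathscr{A}^{\mathbb N_0}$; $\mathcal L(X)$, $\mathcal L_n(X)$ denote the words (of length $n$) appearing in $X$. $\bar d(x,y)=\limsup_{n\to\infty}\frac1n|\{0\le j<n:x_j\ne y_j\}|$; $\bar d^H(A,B)=\max\{\sup_{a\in A}\inf_{b\in B}\bar d(a,b),\sup_{b\in B}\inf_{a\in A}\bar d(a,b)\}$. $X$ has the $\bar d$-shadowing property if for every $\varepsilon>0$ there is $N$ such that for every sequence $(w^{(j)})_{j\ge1}$ in $\mathcal L(X)$ with $|w^{(j)}|\ge N$ there is $x'\in X$ with $\bar d(w^{(1)}w^{(2)}\cdots,x')<\varepsilon$. The $n$-th Markov approximation $X^M_n$ is the set of $x\in\mathscr{A}^{\mathbb N_0}$ all of whose subwords of length $n+1$ lie in $\mathcal L_{n+1}(X)$. $X$ is $\bar d$-approachable if $\bar d^H(X^M_n,X)\to0$ as $n\to\infty$. *)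

(* Defs.v *)
From HB Require Import structures.
From mathcomp Require Import all_boot all_order all_algebra.
From mathcomp Require Import all_classical all_reals.
From mathcomp Require Import topology normedtype sequences Rstruct Rstruct_topology.
From Stdlib Require Rdefinitions.
Notation R := Rdefinitions.R.
Set Implicit Arguments. Unset Strict Implicit. Unset Printing Implicit Defensive.
Import Order.TTheory GRing.Theory Num.Theory.
Local Open Scope classical_set_scope.
Local Open Scope ring_scope.

Section ShiftSpaces.
Variable A : finType.

Definition seqA := nat -> A.

Definition subword (x : seqA) (i n : nat) : seq A := [seq x (i + k)%N | k <- iota 0 n].

Definition shift (x : seqA) : seqA := fun k => x k.+1.

(* closed in the product topology of the discrete A: any x each of whose
   cylinder neighbourhoods [x_0 .. x_{n-1}] meets X lies in X *)
Definition closedX (X : set seqA) : Prop :=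
  forall x : seqA, (forall n : nat, exists2 y, X y & forall i : nat, (i < n)%N -> y i = x i) -> X x.

Definition shift_space (X : set seqA) : Prop :=
  [/\ X !=set0, closedX X & forall x, X x -> X (shift x)].

Definition lang (X : set seqA) (w : seq A) : Prop :=
  exists2 x, X x & exists i, w = subword x i (size w).

Definition dbar (x y : seqA) : R :=
  limn_sup (fun n : nat => (#|[set j : 'I_n | x j != y j]|%:R / n%:R : R)).

Definition dbarH (P Q : set seqA) : R :=
  Num.max (sup [set inf [set dbar a b | b in Q] | a in P])
          (sup [set inf [set dbar a b | a in P] | b in Q]).

Definition cumlen (w : nat -> seq A) (j : nat) : nat := (\sum_(i < j) size (w i))%N.

Definition is_concat (w : nat -> seq A) (x : seqA) : Prop :=
  forall j, subword x (cumlen w j) (size (w j)) = w j.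

(* d-bar shadowing property (N >= 1 w.l.o.g., so the concatenation is infinite) *)
Definition dbar_shadowing (X : set seqA) : Prop :=
  forall eps : R, 0 < eps -> exists N : nat, (0 < N)%N /\
    forall w : nat -> seq A, (forall j, lang X (w j) /\ (N <= size (w j))%N) ->
    forall x, is_concat w x -> exists2 x', X x' & dbar x x' < eps.

Definition markov_approx (X : set seqA) (n : nat) : set seqA :=
  [set x | forall i, lang X (subword x i n.+1)].

Definition dbar_approachable (X : set seqA) : Prop :=
  (fun n => dbarH (markov_approx X n) X) @ \oo --> (0 : R).

End ShiftSpaces.

(* Main.v *)
Require Import Defs.
From mathcomp Require Import all_boot all_order all_algebra.
From mathcomp Require Import all_classical all_reals.
From mathcomp Require Import topology normedtype sequences Rstruct Rstruct_topology.
Set Implicit Arguments. Unset Strict Implicit. Unset Printing Implicit Defensive.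
Import Order.TTheory GRing.Theory Num.Theory.
Local Open Scope classical_set_scope.
Local Open Scope ring_scope.

Section Aux.
Variable A : finType.

Lemma ratio_bnd (x y : seqA A) (n : nat) :
  0 <= (#|[set j : 'I_n | x j != y j]|%:R / n%:R : R) <= 1.
Proof.
apply/andP; split; first by rewrite divr_ge0.
case: n => [|n]; first by rewrite invr0 mulr0.
rewrite ler_pdivrMr ?ltr0Sn // mul1r ler_nat.
by apply: leq_trans (max_card _) _; rewrite card_ord.
Qed.

Lemma dbar_ge0 (x y : seqA A) : 0 <= dbar x y.
Proof.
rewrite /dbar.
set u := (fun n : nat => _).
have bu : bounded_fun (u : R^o^nat).
  rewrite /bounded_fun /=.
  apply/(@ex_bound _ _ _ _ _ (@globally_properfilter _ setT 0%N I)); exists 1 => n _ /=.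
  by have /andP[h0 h1] := ratio_bnd x y n; rewrite ger0_norm.
rewrite limn_supE //; apply: lb_le_inf.
  by exists (sups u 0%N); exists 0%N.
move=> _ [m _ <-] /=.
apply: (le_trans (proj1 (andP (ratio_bnd x y m)))).
apply: ub_le_sup; last by exists m => /=.
by move: bu => /bounded_fun_has_ubound/has_ubound_sdrop; apply.
Qed.

Lemma dbar_refl (x : seqA A) : dbar x x = 0.
Proof.
rewrite /dbar.
have -> : (fun n : nat => (#|[set j : 'I_n | x j != x j]|%:R / n%:R : R)) = fun _ => 0.
  apply: funext => n.
  rewrite eq_card0 ?mul0r // => j.
  by apply/negP => /set_mem /=; rewrite eqxx.
exact: (cvg_limn_inf_sup (cvg_cst (0 : R^o))).2.
Qed.

Lemma sup_in (S : set R) (e : R) : S !=set0 -> (forall s, S s -> 0 <= s <= e) ->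
  0 <= sup S <= e.
Proof.
move=> [s Ss] H; apply/andP; split.
  have /andP[h0 _] := H s Ss; apply: (le_trans h0); apply: ub_le_sup => //.
  by exists e => t /H /andP[].
by apply: ge_sup; [exists s | move=> t /H /andP[]].
Qed.

End Aux.

Theorem mainTheorem7 (A : finType) (X : set (seqA A)) :
  shift_space X -> dbar_shadowing X -> dbar_approachable X.
Proof.
move=> [[x0 X0] _ _] Hsh.
have sizew : forall (x : seqA A) i n, size (subword x i n) = n.
  by move=> x i n; rewrite /subword size_map size_iota.
have XM : forall n b, X b -> markov_approx X n b.
  move=> n b Xb i; exists b => //; exists i; by rewrite sizew.
rewrite /dbar_approachable; apply/(@cvgrPdist_le _ R^o) => e e0.
have [N [N0 HN]] := Hsh e e0.
exists N => // n /= Nn.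
set M := markov_approx X n.
have close : forall a, M a -> exists2 b, X b & dbar a b < e.
  move=> a Ma.
  pose w := fun j => subword a (j * n.+1) n.+1.
  have sw : forall j, size (w j) = n.+1 by move=> j; rewrite sizew.
  apply: (HN w) => [j|j].
    split; last by rewrite sw; apply: leq_trans Nn _.
    have := Ma (j * n.+1)%N; by [].
  rewrite /cumlen (eq_bigr (fun _ => n.+1)); last by move=> i _; rewrite sw.
  by rewrite sum_nat_const card_ord sw.
have B1 : 0 <= sup [set inf [set dbar a b | b in X] | a in M] <= e.
  apply: sup_in; first by exists (inf [set dbar x0 b | b in X]); exists x0 => //; apply: XM.
  move=> _ [a Ma <-]; apply/andP; split.
    apply: lb_le_inf; first by exists (dbar a x0); exists x0.
    by move=> _ [b _ <-]; apply: dbar_ge0.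
  have [b Xb lt] := close a Ma; apply/ltW; apply: le_lt_trans lt.
  apply: ge_inf; last by exists b.
  by exists 0 => _ [c _ <-]; apply: dbar_ge0.
have B2 : 0 <= sup [set inf [set dbar a b | a in M] | b in X] <= e.
  apply: sup_in; first by exists (inf [set dbar a x0 | a in M]); exists x0.
  move=> _ [b Xb <-]; apply/andP; split.
    apply: lb_le_inf; first by exists (dbar b b); exists b => //; apply: XM.
    by move=> _ [c _ <-]; apply: dbar_ge0.
  apply: le_trans (ltW e0); rewrite -(dbar_refl b).
  apply: ge_inf; last by exists b => //; apply: XM.
  by exists 0 => _ [c _ <-]; apply: dbar_ge0.
move: B1 B2 => /andP[a0 a1] /andP[b0 b1].
rewrite /dbarH -/M sub0r normrN ger0_norm.
  case: (leP (sup [set inf [set dbar a b | b in X] | a in M]) (sup [set inf [set dbar a b | a in M] | b in X])) => _; [exact: b1|exact: a1].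
case: (leP (sup [set inf [set dbar a b | b in X] | a in M]) (sup [set inf [set dbar a b | a in M] | b in X])) => _; [exact: b0|exact: a0].
Qed.
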